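(* Let $G=(V,E)$ be a finite simple graph with $V=\{x_1,\dots,x_r\}$, $E=\{e_1,\dots,e_n\}$, and suppose $(x_1,x_2,x_3)$ is a simple path of $G$ with edges $e_1=\{x_1,x_2\}$, $e_2=\{x_2,x_3\}$. Let $s=w_1x_1+w_2x_2+\cdots+w_rx_r\in\operatorname{Im}(\varphi_G)$ with $w_1<w_2$. Then the simplicial complex $\Delta^G_s$ is acyclic (all its reduced homology groups with coefficients in $\mathbb{K}$ vanish).
   Context: $\mathbb{N}[V]$ and $\mathbb{N}[E]$ denote the free commutative monoids on $V$ and on $E$, and $\varphi_G:\mathbb{N}[E]\to\mathbb{N}[V]$ is the monoid homomorphism with $\varphi_G(e_j)=x_{j_1}+x_{j_2}$ for $e_j=\{x_{j_1},x_{j_2}\}$. For $F\subseteq[n]$ put $e_F=\sum_{i\in F}e_i$, and for $s\in\mathbb{N}[V]$ let $\Delta^G_s=\{F\subseteq[n]: s-\varphi_G(e_F)\in\operatorname{Im}(\varphi_G)\}$ (here $s-\varphi_G(e_F)$ is computed in $\mathbb{Z}^V$), a simplicial complex on $[n]$. A path is a walk $(y_0,\dots,y_m)$ (consecutive vertices adjacent) whose interior vertices $y_1,\dots,y_{m-1}$ have degree exactly $2$ in $G$; a path is simple if the common neighbours of its first and last vertices all lie on the path. *)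

(* Defs.v *)
From HB Require Import structures.
From mathcomp Require Import all_boot all_order all_algebra.
Set Implicit Arguments. Unset Strict Implicit. Unset Printing Implicit Defensive.
Import GRing.Theory.

Definition simple_graph (r n : nat) (e : 'I_n -> {set 'I_r}) : Prop :=
  (forall j, #|e j| = 2) /\ injective e.

Definition adj (r n : nat) (e : 'I_n -> {set 'I_r}) (x y : 'I_r) : bool :=
  [exists j, e j == [set x; y]] && (x != y).

Definition deg (r n : nat) (e : 'I_n -> {set 'I_r}) (x : 'I_r) : nat :=
  #|[set j | x \in e j]|.

(* phi_G applied to an element m of N[E], evaluated at vertex v *)
Definition phiG (r n : nat) (e : 'I_n -> {set 'I_r}) (m : 'I_n -> nat)
  (v : 'I_r) : nat := \sum_(j | v \in e j) m j.

Definition in_image (r n : nat) (e : 'I_n -> {set 'I_r}) (s : 'I_r -> nat) : Prop :=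
  exists m : 'I_n -> nat, forall v, s v = phiG e m v.

(* F \in Delta^G_s : s - phi_G(e_F) \in Im(phi_G) (computed in Z^V), i.e.
   s = phi_G(e_F) + phi_G(m) for some m in N[E]. *)
Definition in_Delta (r n : nat) (e : 'I_n -> {set 'I_r}) (s : 'I_r -> nat)
  (F : {set 'I_n}) : Prop :=
  exists m : 'I_n -> nat, forall v,
    ((s v)%:Z - (#|[set j in F | v \in e j]|)%:Z = (phiG e m v)%:Z)%R.

(* simplicial (augmented) boundary map on chains indexed by subsets of [n]:
   d[F] = \sum_{i in F} (-1)^{#{j in F | j < i}} [F \ i] *)
Definition bd (K : fieldType) (n : nat) (c : {set 'I_n} -> K) : {set 'I_n} -> K :=
  fun G => (\sum_(i | i \notin G) (-1)%R ^+ #|[set j in G | (j < i)%N]| * c (i |: G))%R.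

(* A simplicial complex Delta (given as a predicate on faces) is acyclic over K:
   for every d, every (d-1)-dimensional reduced cycle (chain supported on faces
   of Delta with d elements, d = 0 being the augmentation) is a boundary of a
   chain supported on faces of Delta with d+1 elements; i.e. all reduced
   homology groups H~_{d-1}(Delta; K) vanish. *)
Definition acyclic (K : fieldType) (n : nat) (Delta : {set 'I_n} -> Prop) : Prop :=
  forall (d : nat) (c : {set 'I_n} -> K),
    (forall F, (c F != 0)%R -> Delta F /\ #|F| = d) ->
    (forall G, bd c G = 0%R) ->
    exists b : {set 'I_n} -> K,
      (forall F, (b F != 0)%R -> Delta F /\ #|F| = d.+1) /\
      (forall G, bd b G = c G).

(* Main.v *)
Require Import Defs.
From mathcomp Require Import all_boot all_order all_algebra.
From mathcomp Require Import zify.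
Import GRing.Theory.

Lemma card_sepD1 (T : finType) (A : {set T}) (P : pred T) (a : T) :
  #|[set j in A | P j]| = ((a \in A) && P a) + #|[set j in A :\ a | P j]|.
Proof.
rewrite (cardsD1 a); congr (_ + _); first by rewrite !inE.
apply: eq_card => x; rewrite !inE; by case: (x == a).
Qed.

Lemma cone_step (r n : nat) (e : 'I_n -> {set 'I_r})
  (x1 x2 x3 : 'I_r) (e1 e2 : 'I_n) (s : 'I_r -> nat) :
  simple_graph e -> e1 != e2 ->
  e e1 = [set x1; x2] -> e e2 = [set x2; x3] -> deg e x2 = 2 ->
  s x1 < s x2 ->
  forall F, in_Delta e s F -> in_Delta e s (e2 |: F).
Proof.
move=> _ ne12 He1 He2 Hdeg Hs F [m Hm].
have [aF|aF] := boolP (e2 \in F).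
  have -> : e2 |: F = F by apply/setP=> x; rewrite !inE; case: eqP => // ->.
  by exists m.
have x1e1 : x1 \in e e1 by rewrite He1 !inE eqxx.
have x2e1 : x2 \in e e1 by rewrite He1 !inE eqxx orbT.
have x2e2 : x2 \in e e2 by rewrite He2 !inE eqxx.
have H2 : [set j | x2 \in e j] = [set e1; e2].
  apply/eqP; rewrite eq_sym eqEcard; apply/andP; split.
    by apply/subsetP=> j; rewrite !inE => /orP[] /eqP ->.
  by rewrite cards2 ne12; move: Hdeg; rewrite /deg => ->.
have inx2 j : x2 \in e j -> (j == e1) || (j == e2).
  move=> h; have : j \in [set e1; e2] by rewrite -H2 inE.
  by rewrite !inE.
have P2 : phiG e m x2 = m e1 + m e2.
  rewrite /phiG (bigD1 e1) //= (bigD1 e2) /=; last by rewrite x2e2 eq_sym.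
  rewrite big1 ?addn0 // => j /andP[/andP[h1 h2] h3]; move: (inx2 _ h1) h2 h3; by case/orP=> ->.

have P1 : m e1 <= phiG e m x1.
  by rewrite /phiG (bigD1 e1) //= leq_addr.
have Fsub : #|[set j in F | x2 \in e j]| <= #|[set j in F | x1 \in e j]|.
  apply/subset_leq_card/subsetP=> j; rewrite !inE => /andP[jF /inx2 /orP[]/eqP Ej].
    by rewrite jF Ej x1e1.
  by move: aF; rewrite -Ej jF.
have ma : 0 < m e2.
  have h1 := Hm x1; have h2 := Hm x2; rewrite P2 in h2; lia.
set m' := fun j => if j == e2 then (m j).-1 else m j.
exists m' => v.
have Hphi : phiG e m v = phiG e m' v + (v \in e e2).
  rewrite /phiG; case: (boolP (v \in e e2)) => ve.
    rewrite (bigD1 e2) //= [in RHS](bigD1 e2) //= /=.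
    have -> : m' e2 = (m e2).-1 by rewrite /m' eqxx.
    have ->: \sum_(i | (v \in e i) && (i != e2)) m i = \sum_(i | (v \in e i) && (i != e2)) m' i.
      by apply: eq_bigr=> j /andP[_ /negbTE]; rewrite /m' => ->.
    by rewrite addnAC addn1 prednK.
  rewrite addn0; apply: eq_bigr=> j vj; rewrite /m'; case: eqP => // E.
  by move: ve; rewrite -E vj.
have Hc : #|[set j in e2 |: F | v \in e j]| = (v \in e e2) + #|[set j in F | v \in e j]|.
  rewrite (card_sepD1 _ _ _ e2) setU1K // !inE eqxx.
  done.
have := Hm v; rewrite Hc Hphi; lia.
Qed.

Lemma sign_step (K : fieldType) (a i : nat) (X N : nat) (y : K) : i != a ->
  ((-1) ^+ ((a < i) + X)%N * ((-1) ^+ ((i < a) + N)%N * y) =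
   - ((-1) ^+ N * ((-1) ^+ X * y)))%R.
Proof.
move=> ne.
have h : ((a < i) + X + ((i < a) + N) = 1 + (N + X))%N.
  have h1 : ((a < i) + (i < a) = 1)%N.
    by move: ne; case: ltngtP => // ->; rewrite eqxx.
  lia.
by rewrite mulrA -exprD h !exprD expr1 mulN1r mulNr !mulrA.
Qed.

Theorem lemma3p6 (K : fieldType) (r n : nat) (e : 'I_n -> {set 'I_r})
  (x1 x2 x3 : 'I_r) (e1 e2 : 'I_n) (s : 'I_r -> nat) :
  simple_graph e ->
  e1 != e2 ->
  e e1 = [set x1; x2] ->
  e e2 = [set x2; x3] ->
  (* (x1, x2, x3) is a path: its interior vertex x2 has degree exactly 2 *)
  deg e x2 = 2 ->
  (* the path is simple: common neighbours of x1 and x3 lie on the path *)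
  (forall y, adj e x1 y -> adj e x3 y -> y \in [:: x1; x2; x3]) ->
  in_image e s ->
  s x1 < s x2 ->
  acyclic K (in_Delta e s).
Proof.
move=> Hg ne12 He1 He2 Hdeg _ _ Hs.
have cone := @cone_step r n e x1 x2 x3 e1 e2 s Hg ne12 He1 He2 Hdeg Hs.
set a := e2.
move=> d c Hc Hcyc.
pose b := fun F : {set 'I_n} => if a \in F then
   ((-1) ^+ #|[set j in F | (j < a)%N]| * c (F :\ a))%R else 0%R.
exists b; split.
  move=> F; rewrite /b; case: ifP => aF; last by rewrite eqxx.
  have [->|nz] := eqVneq (c (F :\ a)) 0%R; first by rewrite mulr0 eqxx.
  move=> _; have [HD Hcard] := Hc _ nz; split.
    by have := cone _ HD; rewrite setD1K.
  by rewrite (cardsD1 a) aF Hcard.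
move=> G; rewrite /bd.
have [aG|aG] := boolP (a \in G).
  have H0 := Hcyc (G :\ a); rewrite /bd in H0.
  rewrite (bigD1 a) /= in H0; last by rewrite !inE eqxx.
  rewrite setD1K // in H0.
  have NN : #|[set j in G :\ a | (j < a)%N]| = #|[set j in G | (j < a)%N]|.
    by rewrite (card_sepD1 _ G _ a) ltnn andbF.
  rewrite NN in H0.
  set N := #|[set j in G | (j < a)%N]| in H0 NN *.
  set S := (\sum_(i | _) _)%R in H0.
  have HS : S = (- ((-1) ^+ N * c G))%R by apply/eqP; rewrite -addr_eq0 addrC H0.
  have -> : (\sum_(i | i \notin G) (-1) ^+ #|[set j in G | (j < i)%N]| * b (i |: G) =
             - ((-1) ^+ N * S))%R.
    rewrite /S mulr_sumr -sumrN.
    have ep : forall i, (i \notin G :\ a) && (i != a) = (i \notin G).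
      move=> i; rewrite !inE; case: (eqVneq i a) => [->|] /=; by rewrite ?aG ?andbT.
    rewrite (eq_bigl _ _ ep); apply: eq_bigr => i iG.
    have ia : i != a by apply: contraNneq iG => ->.
    rewrite /b in_setU1 aG orbT.
    have E1 : #|[set j in G | (j < i)%N]| = ((a < i)%N + #|[set j in G :\ a | (j < i)%N]|)%N.
      by rewrite (card_sepD1 _ G _ a) aG.
    have E2 : #|[set j in i |: G | (j < a)%N]| = ((i < a)%N + N)%N.
      by rewrite (card_sepD1 _ (i |: G) _ i) setU11 setU1K.
    rewrite E1 E2.
    have -> : (i |: G) :\ a = i |: (G :\ a).
      apply/setP=> x; rewrite !inE; case: (eqVneq x a) => [->|] //=.
      by rewrite eq_sym (negbTE ia).
    exact: sign_step.
  by rewrite HS mulrN opprK mulrA -exprD addnn -mul2n exprM sqrrN !expr1n mul1r.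
rewrite (bigD1 a) //= big1 ?addr0.
  rewrite /b setU11 setU1K //.
  have -> : #|[set j in a |: G | (j < a)%N]| = #|[set j in G | (j < a)%N]|.
    by rewrite (card_sepD1 _ _ _ a) setU11 ltnn /= setU1K.
  by rewrite mulrA -exprD addnn -mul2n exprM sqrrN !expr1n mul1r.
move=> i /andP[iG ia]; rewrite /b !inE eq_sym (negbTE ia) (negbTE aG) /=.
by rewrite mulr0.
Qed.
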